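(* Let $\mathcal{H}$ be a real Hilbert space, $A:\mathcal{H}\rightrightarrows\mathcal{H}$ maximal monotone, $p\geq2$ an integer and $\theta\in(0,1)$. Let $\Omega=\{x\in\mathcal{H}:0\notin Ax\}$ and, for $x\in\Omega$, let $\Lambda_\theta(x)$ be the unique $\lambda>0$ with $\lambda^{1/(p-1)}\|x-(I+\lambda A)^{-1}x\|=\theta^{1/(p-1)}$. Define on $\mathcal{H}$ \[ \Gamma_\theta(x)=\Big(\inf\{\alpha>0:\|x-(I+\alpha^{-1}A)^{-1}x\|\leq\alpha^{\frac1{p-1}}\theta^{\frac1{p-1}}\}\Big)^{\frac1{p-1}}. \] Then $\Gamma_\theta(x)=(1/\Lambda_\theta(x))^{1/(p-1)}$ if $x\in\Omega$ and $\Gamma_\theta(x)=0$ otherwise, and $\Gamma_\theta$ is Lipschitz continuous on $\mathcal{H}$ with constant $\theta^{-1/(p-1)}$.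
   Context: $(I+\lambda A)^{-1}$ is the resolvent of $A$ of index $\lambda>0$. For $x\in\Omega$, the map $\lambda\mapsto\lambda^{1/(p-1)}\|x-(I+\lambda A)^{-1}x\|$ is a continuous strictly increasing bijection of $[0,\infty)$ onto $[0,\infty)$, so $\Lambda_\theta$ is well defined. *)

(* Defs.v *)
From HB Require Import structures.
From mathcomp Require Import all_boot all_order all_algebra.
From mathcomp Require Import all_classical all_reals all_analysis.
Set Implicit Arguments. Unset Strict Implicit. Unset Printing Implicit Defensive.
Import Order.TTheory GRing.Theory Num.Theory.
Import numFieldNormedType.Exports.
Local Open Scope classical_set_scope.
Local Open Scope ring_scope.

(* A real Hilbert space is a complete normed module V over R whose norm
   derives from an inner product ip. *)
Definition is_inner_product (R : realType) (V : normedModType R)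
  (ip : V -> V -> R) : Prop :=
  [/\ (forall x y, ip x y = ip y x),
      (forall (a : R) x y z, ip (a *: x + y) z = a * ip x z + ip y z)
    & (forall x, `|x| ^+ 2 = ip x x)].

(* set-valued operators A : V => V, given by their graph: A x u means u in Ax *)
Definition monotone_op (R : realType) (V : normedModType R)
  (ip : V -> V -> R) (A : V -> set V) : Prop :=
  forall x y u v, A x u -> A y v -> 0 <= ip (x - y) (u - v).

Definition maximal_monotone (R : realType) (V : normedModType R)
  (ip : V -> V -> R) (A : V -> set V) : Prop :=
  monotone_op ip A /\
  forall B : V -> set V, monotone_op ip B ->
    (forall x u, A x u -> B x u) -> forall x u, B x u -> A x u.

(* resolvent (I + lam A)^{-1} x : the y with x in y + lam A y,
   i.e. lam^-1 (x - y) in A y (single-valued for A maximal monotone, lam>0) *)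
Definition resolvent (R : realType) (V : normedModType R)
  (A : V -> set V) (lam : R) (x : V) : V :=
  xget 0 [set y | A y (lam^-1 *: (x - y))].

Definition ex (R : realType) (p : nat) : R := ((p.-1)%:R)^-1.

Definition Omega (R : realType) (V : normedModType R) (A : V -> set V) : set V :=
  [set x | ~ A x 0].

Definition Lambda (R : realType) (V : normedModType R) (A : V -> set V)
  (p : nat) (theta : R) (x : V) : R :=
  xget 0 [set lam : R | 0 < lam /\
     lam `^ ex R p * `|x - resolvent A lam x| = theta `^ ex R p].

Definition Gamma (R : realType) (V : normedModType R) (A : V -> set V)
  (p : nat) (theta : R) (x : V) : R :=
  (inf [set alpha : R | 0 < alpha /\
     `|x - resolvent A alpha^-1 x| <= alpha `^ ex R p * theta `^ ex R p])
  `^ ex R p.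

(* Main.v *)
Require Import Defs.
From HB Require Import structures.
From mathcomp Require Import all_boot all_order all_algebra.
From mathcomp Require Import all_classical all_reals all_analysis.
From mathcomp Require Import ring lra.
Import Order.TTheory GRing.Theory Num.Theory.
Import numFieldNormedType.Exports.
Local Open Scope classical_set_scope.
Local Open Scope ring_scope.
Set Implicit Arguments. Unset Strict Implicit. Unset Printing Implicit Defensive.
Section IP.
Variables (R : realType) (V : normedModType R) (ip : V -> V -> R).
Hypothesis hip : is_inner_product ip.

Lemma ipC x y : ip x y = ip y x. Proof. by case: hip. Qed.
Lemma ipxx x : ip x x = `|x| ^+ 2. Proof. by case: hip. Qed.
Lemma ipDZl a x y z : ip (a *: x + y) z = a * ip x z + ip y z. Proof. by case: hip. Qed.
Lemma ip0l z : ip 0 z = 0.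
Proof. have := ipDZl 1 0 0 z; rewrite scaler0 addr0 mul1r => h. lra. Qed.
Lemma ipZl a x z : ip (a *: x) z = a * ip x z.
Proof. by have := ipDZl a x 0 z; rewrite addr0 ip0l addr0. Qed.
Lemma ipDl x y z : ip (x + y) z = ip x z + ip y z.
Proof. by have := ipDZl 1 x y z; rewrite scale1r mul1r. Qed.
Lemma ipNl x z : ip (- x) z = - ip x z.
Proof. by rewrite -scaleN1r ipZl mulN1r. Qed.
Lemma ipBl x y z : ip (x - y) z = ip x z - ip y z.
Proof. by rewrite ipDl ipNl. Qed.
Lemma ip0r z : ip z 0 = 0. Proof. by rewrite ipC ip0l. Qed.
Lemma ipZr a x z : ip z (a *: x) = a * ip z x. Proof. by rewrite ipC ipZl ipC. Qed.
Lemma ipDr x y z : ip z (x + y) = ip z x + ip z y. Proof. by rewrite ipC ipDl !(ipC z). Qed.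
Lemma ipNr x z : ip z (- x) = - ip z x. Proof. by rewrite ipC ipNl ipC. Qed.
Lemma ipBr x y z : ip z (x - y) = ip z x - ip z y. Proof. by rewrite ipDr ipNr. Qed.

Lemma normD2 x y : `|x + y| ^+ 2 = `|x| ^+ 2 + 2 * ip x y + `|y| ^+ 2.
Proof. rewrite -!ipxx ipDl !ipDr (ipC y x); ring. Qed.
Lemma normB2 x y : `|x - y| ^+ 2 = `|x| ^+ 2 - 2 * ip x y + `|y| ^+ 2.
Proof. rewrite -!ipxx ipBl !ipBr (ipC y x); ring. Qed.

Lemma CS x y : ip x y <= `|x| * `|y|.
Proof.
have h := normB2 (`|y| *: x) (`|x| *: y).
rewrite !normrZ !normr_id ipZl ipZr in h.
have /= h0 := normr_ge0 (`|y| *: x - `|x| *: y).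
have [x0|xp] := eqVneq `|x| 0.
  by move/eqP: x0; rewrite normr_eq0 => /eqP ->; rewrite ip0l normr0 mul0r.
have [y0|yp] := eqVneq `|y| 0.
  by move/eqP: y0; rewrite normr_eq0 => /eqP ->; rewrite ip0r normr0 mulr0.
have hx : 0 < `|x| by rewrite lt_neqAle eq_sym xp normr_ge0.
have hy : 0 < `|y| by rewrite lt_neqAle eq_sym yp normr_ge0.
have hxy : 0 < `|x| * `|y| by apply: mulr_gt0.
have h2 : 0 <= `|(`|y| *: x - `|x| *: y)| ^+ 2 by apply: exprn_ge0.
rewrite h in h2.
nra.
Qed.

Lemma CSn x y : `|ip x y| <= `|x| * `|y|.
Proof.
rewrite ler_norml CS andbT.
have := CS x (- y); rewrite ipNr normrN; lra.
Qed.

Lemma polar x y : ip x y = (`|x + y| ^+ 2 - `|x - y| ^+ 2) / 4.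
Proof. by rewrite normD2 normB2; field. Qed.
Lemma ip_cvgl (Y : nat -> V) y v : Y @ \oo --> y ->
  (fun n => ip (Y n) v) @ \oo --> ip y v.
Proof.
move=> /cvgrPdist_le hY; apply/cvgrPdist_le => e e0.
have e1 : 0 < e / (`|v| + 1) by apply: divr_gt0 => //; have := normr_ge0 v; lra.
near=> n; rewrite -ipBl; apply: le_trans (CSn _ _) _.
have hn : `|y - Y n| <= e / (`|v| + 1) by near: n; apply: hY.
have hv := normr_ge0 v.
have : e / (`|v| + 1) * `|v| <= e.
  by rewrite mulrAC ler_pdivrMr ?ler_wpM2l; lra.
have : `|y - Y n| * `|v| <= e / (`|v| + 1) * `|v| by apply: ler_wpM2r.
lra.
Unshelve. all: by end_near.
Qed.

Lemma ip_cvgr (Y : nat -> V) y v : Y @ \oo --> y ->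
  (fun n => ip v (Y n)) @ \oo --> ip v y.
Proof. move=> /ip_cvgl h; rewrite ipC; under eq_fun do rewrite ipC; exact: h. Qed.

Lemma norm2_cvg (Y : nat -> V) y : Y @ \oo --> y ->
  (fun n => `|Y n| ^+ 2) @ \oo --> `|y| ^+ 2.
Proof. move=> h; exact: (cvgM (cvg_norm h) (cvg_norm h)). Qed.
End IP.

Lemma small_t (R : realType) (a b : R) : 0 <= b ->
  (forall t, 0 < t <= 1 -> 0 <= a + t * b) -> 0 <= a.
Proof.
move=> b0 H; have [//|a0] := lerP 0 a.
have ba : 0 < b - a by lra.
have t0 : 0 < - a / (b - a) by apply: divr_gt0; lra.
have t1 : - a / (b - a) <= 1 by rewrite ler_pdivrMr //; lra.
have := H (- a / (b - a)); rewrite t0 t1 => /(_ isT).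
have -> : a + - a / (b - a) * b = - (a ^+ 2) / (b - a) by field; lra.
have hq : 0 < (b - a)^-1 by rewrite invr_gt0.
have ha2 : 0 < a ^+ 2 by rewrite expr2; nra.
have := mulr_gt0 ha2 hq; rewrite mulNr; lra.
Qed.

Section Minty.
Variables (R : realType) (V : completeNormedModType R) (ip : V -> V -> R).
Hypothesis hip : is_inner_product ip.
Variable G : V -> set V.
Hypothesis Gmono : monotone_op ip G.
Hypothesis Gmax : forall x u, (forall y v, G y v -> 0 <= ip (x - y) (u - v)) -> G x u.

Definition QQ x u c := forall y v, G y v -> ip x v + ip y u - ip y v <= c.
Definition vl (x u : V) (c : R) := c + (`|x| ^+ 2 + `|u| ^+ 2) / 2.

Lemma expand4 x y u v : ip (x - y) (u - v) = ip x u - ip x v - ip y u + ip y v.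
Proof. rewrite !(ipBl hip) !(ipBr hip). lra. Qed.

Lemma Q_lb x u c : QQ x u c -> ip x u <= c.
Proof.
move=> hQ; have [//|hlt] := lerP (ip x u) c.
have Gxu : G x u.
  apply: Gmax => y v Gyv; have := hQ y v Gyv; rewrite expand4; lra.
have := hQ x u Gxu; lra.
Qed.

Lemma vl_ge0 x u c : QQ x u c -> 0 <= vl x u c.
Proof.
move=> /Q_lb h; have := normD2 hip x u.
have : 0 <= `|x + u| ^+ 2 by apply: exprn_ge0.
rewrite /vl; lra.
Qed.

Lemma normcomb (a b : V) (t : R) :
  `|(1 - t) *: a + t *: b| ^+ 2 =
  (1 - t) * `|a| ^+ 2 + t * `|b| ^+ 2 - t * (1 - t) * `|a - b| ^+ 2.
Proof.
rewrite -!(ipxx hip) !(ipDl hip, ipZl hip, ipDr hip, ipZr hip, ipBl hip, ipBr hip).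
rewrite !(ipNl hip, ipNr hip) (ipC hip b a); ring.
Qed.

Lemma Q_conv x u c x' u' c' t : QQ x u c -> QQ x' u' c' -> 0 <= t <= 1 ->
  QQ ((1 - t) *: x + t *: x') ((1 - t) *: u + t *: u') ((1 - t) * c + t * c').
Proof.
move=> h1 h2 /andP[t0 t1] y v Gyv.
have := h1 y v Gyv; have := h2 y v Gyv.
rewrite !(ipDl hip, ipZl hip, ipDr hip, ipZr hip) => e1 e2.
nra.
Qed.

Lemma vl_comb x u c x' u' c' t :
  vl ((1 - t) *: x + t *: x') ((1 - t) *: u + t *: u') ((1 - t) * c + t * c') =
  (1 - t) * vl x u c + t * vl x' u' c' - t * (1 - t) * (`|x - x'| ^+ 2 + `|u - u'| ^+ 2) / 2.
Proof. rewrite /vl !normcomb; ring. Qed.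

Lemma G_ne : exists y v, G y v.
Proof.
case: (pselect (exists y v, G y v)) => // hn; exists 0, 0; apply: Gmax => y v Gyv.
by exfalso; apply: hn; exists y, v.
Qed.

Lemma minty0 : exists x, G x (- x).
Proof.
set E := [set r | exists x u c, QQ x u c /\ r = vl x u c].
have E0 : E !=set0.
  have [y0 [v0 G0]] := G_ne; exists (vl y0 v0 (ip y0 v0)).
  exists y0, v0, (ip y0 v0); split => // y v Gyv.
  have := Gmono G0 Gyv; rewrite expand4; lra.
have Elb : lbound E 0 by move=> r [x [u [c [hQ ->]]]]; apply: vl_ge0.
have hinf : has_inf E by split => //; exists 0.
set m := inf E.
have m0 : 0 <= m := lb_le_inf E0 Elb.
have mle : forall x u c, QQ x u c -> m <= vl x u c.
  by move=> x u c hQ; apply: (ge_inf hinf.2); exists x, u, c.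
have hseq : forall n : nat, exists t : V * V * R,
    QQ t.1.1 t.1.2 t.2 /\ vl t.1.1 t.1.2 t.2 < m + n.+1%:R^-1.
  move=> n; have hn : (0 : R) < n.+1%:R^-1 by rewrite invr_gt0.
  have [e [x [u [c [hQ ->]]]] he] := inf_adherent hn hinf.
  by exists (x, u, c).
have [f hf] := choice hseq.
set X := fun n => (f n).1.1; set U := fun n => (f n).1.2; set Cn := fun n => (f n).2.
have hQn n : QQ (X n) (U n) (Cn n) := (hf n).1.
have hvn n : vl (X n) (U n) (Cn n) < m + n.+1%:R^-1 := (hf n).2.
clearbody X U Cn m.
have h12 : 0 <= (2^-1 : R) <= 1 by apply/andP; split; lra.
have hC n k : `|X n - X k| ^+ 2 + `|U n - U k| ^+ 2 <= 4 * (n.+1%:R^-1 + k.+1%:R^-1).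
  have := mle _ _ _ (Q_conv (hQn n) (hQn k) h12); rewrite vl_comb.
  have e12 : 1 - 2^-1 = (2^-1 : R) by field.
  rewrite e12; have := hvn n; have := hvn k.
  move: (vl (X k) _ _) (vl (X n) _ _) (`|X n - X k| ^+ 2 + `|U n - U k| ^+ 2) (n.+1%:R^-1 : R) (k.+1%:R^-1 : R) => a b c d e; lra.
have cauchyY : forall Y : nat -> V,
    (forall n k, `|Y n - Y k| ^+ 2 <= 4 * (n.+1%:R^-1 + k.+1%:R^-1)) -> cvg (Y @ \oo).
  move=> Y hY; apply: cauchy_cvg; apply: cauchy_exP => e e0.
  have e2 : 0 < e ^+ 2 / 8 by apply: divr_gt0 => //; apply: exprn_gt0.
  have [N _ hN] := near_infty_natSinv_lt (PosNum e2).
  exists (Y N); exists N => // n /= hn; rewrite -ball_normE /ball_ /=.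
  have h1 := hN N (leqnn N); have h2 := hN n hn; have := hY N n; move: h1 h2 => /=.
  move: (N.+1%:R^-1 : R) (n.+1%:R^-1 : R) (`|Y N - Y n|) (normr_ge0 (Y N - Y n)) => a b c c0.
  move=> ha hb hc; rewrite ltNge; apply/negP => hce; nra.
have /cvg_ex [x xX] : cvg (X @ \oo).
  apply: cauchyY => n k; have := hC n k.
  have := exprn_ge0 2 (normr_ge0 (U n - U k)).
  move: (n.+1%:R^-1 : R) (k.+1%:R^-1 : R) => a b; lra.
have /cvg_ex [u uU] : cvg (U @ \oo).
  apply: cauchyY => n k; have := hC n k.
  have := exprn_ge0 2 (normr_ge0 (X n - X k)).
  move: (n.+1%:R^-1 : R) (k.+1%:R^-1 : R) => a b; lra.
set c := m - (`|x| ^+ 2 + `|u| ^+ 2) / 2.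
have Qx : QQ x u c.
  move=> y v Gyv.
  have hL : (fun n => ip (X n) v + ip y (U n) - ip y v) @ \oo --> ip x v + ip y u - ip y v.
    apply: cvgB; last exact: cvg_cst.
    by apply: cvgD; [exact: ip_cvgl | exact: ip_cvgr].
  have hR : (fun n => m + n.+1%:R^-1 - (`|X n| ^+ 2 + `|U n| ^+ 2) / 2) @ \oo --> c.
    rewrite /c -[m in X in _ --> X]addr0; apply: cvgB.
      by apply: cvgD; [exact: cvg_cst | exact: cvg_harmonic].
    by apply: cvgMr_tmp; apply: cvgD; exact: norm2_cvg.
  apply: (ler_cvg_to hL hR); near=> n.
  have := hQn n y v Gyv; have := hvn n; rewrite /vl.
  move: (n.+1%:R^-1 : R) => a; lra.
have hm : vl x u c = m by rewrite /vl /c; ring.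
have key : forall y v, G y v -> m + `|x + u| ^+ 2 / 2 <= ip (y + u) (v + x).
  move=> y v Gyv.
  have Qy : QQ y v (ip y v).
    by move=> y' v' G'; have := Gmono Gyv G'; rewrite expand4; lra.
  have ident : vl y v (ip y v) - m - (`|x - y| ^+ 2 + `|u - v| ^+ 2) / 2 =
      ip (y + u) (v + x) - `|x + u| ^+ 2 / 2 - m.
    rewrite /vl !(normB2 hip) (normD2 hip) !(ipDl hip) !(ipDr hip).
    rewrite (ipC hip y x) (ipC hip u x) (ipC hip u v); lra.
  have S0 : 0 <= (`|x - y| ^+ 2 + `|u - v| ^+ 2) / 2.
    have := exprn_ge0 2 (normr_ge0 (x - y)); have := exprn_ge0 2 (normr_ge0 (u - v)); lra.
  suff : 0 <= ip (y + u) (v + x) - `|x + u| ^+ 2 / 2 - m by lra.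
  rewrite -ident; apply: (small_t S0) => t /andP[t0 t1].
  have ht : 0 <= t <= 1 by rewrite t1 ltW.
  have := mle _ _ _ (Q_conv Qx Qy ht); rewrite vl_comb hm.
  move: (vl y v (ip y v)) ((`|x - y| ^+ 2 + `|u - v| ^+ 2)) => W S h.
  have e : (1 - t) * m + t * W - t * (1 - t) * S / 2 - m =
           t * (W - m - S / 2 + t * (S / 2)) by ring.
  have : 0 <= t * (W - m - S / 2 + t * (S / 2)) by rewrite -e; lra.
  by rewrite pmulr_rge0.
have Gm : G (- u) (- x).
  apply: Gmax => y v Gyv; have := key y v Gyv.
  have -> : ip (- u - y) (- x - v) = ip (y + u) (v + x).
    by rewrite -opprD -(opprD x) (ipNl hip) (ipNr hip) opprK addrC (addrC x).
  have := exprn_ge0 2 (normr_ge0 (x + u)); lra.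
have := key _ _ Gm; rewrite addNr (ip0l hip) => h0.
have : `|x + u| ^+ 2 <= 0 by have := exprn_ge0 2 (normr_ge0 (x + u)); lra.
rewrite le_eqVlt ltNge exprn_ge0 // orbF sqrf_eq0 normr_eq0 addr_eq0 => /eqP hu.
by exists x; move: Gm; rewrite hu opprK.
Unshelve. all: by end_near.
Qed.
End Minty.

Section Resolvent.
Variables (R : realType) (V : completeNormedModType R) (ip : V -> V -> R).
Hypothesis hip : is_inner_product ip.
Variable A : V -> set V.
Hypothesis hA : maximal_monotone ip A.

Lemma Amono : monotone_op ip A. Proof. by case: hA. Qed.

Lemma Amax x u : (forall y v, A y v -> 0 <= ip (x - y) (u - v)) -> A x u.
Proof.
move=> H; pose B a w := A a w \/ (a = x /\ w = u).
apply: (hA.2 B); last by right.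
- move=> a b w1 w2 [h1|[-> ->]] [h2|[-> ->]].
  + exact: Amono h1 h2.
  + have := H _ _ h1; rewrite -(opprB x a) -(opprB u w1) (ipNl hip) (ipNr hip) opprK //.
  + exact: H.
  + by rewrite subrr (ip0l hip).
- by move=> a w h; left.
Qed.

Local Notation J := (resolvent A).

Lemma J_spec lam x : 0 < lam -> A (J lam x) (lam^-1 *: (x - J lam x)).
Proof.
move=> lam0.
pose G a w := A (a + x) (lam^-1 *: w).
have Gmono : monotone_op ip G.
  move=> a b w1 w2 h1 h2; have := Amono h1 h2.
  rewrite -scalerBr (ipZr hip) opprD addrACA subrr addr0 pmulr_rge0 // invr_gt0 //.
have Gmax : forall a w, (forall b w', G b w' -> 0 <= ip (a - b) (w - w')) -> G a w.
  move=> a w H; apply: Amax => y v Ayv.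
  have Gb : G (y - x) (lam *: v) by rewrite /G subrK scalerA mulVf ?gt_eqF // scale1r.
  have := H _ _ Gb.
  have -> : a - (y - x) = a + x - y by rewrite opprB addrA.
  have -> : w - lam *: v = lam *: (lam^-1 *: w - v).
    by rewrite scalerBr scalerA divff ?gt_eqF // scale1r.
  by rewrite (ipZr hip) pmulr_rge0.
have [a Ga] := minty0 hip Gmono Gmax.
have hex : exists y, [set y | A y (lam^-1 *: (x - y))] y.
  exists (a + x) => /=; move: Ga; rewrite /G.
  by have -> : x - (a + x) = - a by rewrite opprD addrCA subrr addr0.
exact: (xgetPex 0 hex).
Qed.

Lemma J_uniq lam x y : 0 < lam -> A y (lam^-1 *: (x - y)) -> J lam x = y.
Proof.
move=> lam0 Ay; have := Amono (J_spec x lam0) Ay.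
set z := J lam x.
rewrite -scalerBr (ipZr hip) pmulr_rge0 ?invr_gt0 //.
have -> : x - z - (x - y) = - (z - y) by rewrite opprB addrC addrA subrK opprB.
rewrite (ipNr hip) (ipxx hip) oppr_ge0 => h.
apply/eqP; rewrite -subr_eq0 -normr_eq0 -sqrf_eq0 eq_le h /=.
exact: exprn_ge0.
Qed.

Lemma J_fix lam x : 0 < lam -> A x 0 -> J lam x = x.
Proof. by move=> lam0 Ax; apply: J_uniq => //; rewrite subrr scaler0. Qed.

Lemma J_fixinv lam x : 0 < lam -> J lam x = x -> A x 0.
Proof. by move=> lam0 hJ; have := J_spec x lam0; rewrite hJ subrr scaler0. Qed.

Lemma J_firm lam x y : 0 < lam -> `|(x - J lam x) - (y - J lam y)| <= `|x - y|.
Proof.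
move=> lam0; have h := Amono (J_spec x lam0) (J_spec y lam0).
rewrite -scalerBr (ipZr hip) pmulr_rge0 ?invr_gt0 // in h.
move: h; set a := J lam x; set b := J lam y; set s := x - a; set t := y - b => h.
have hx : x = a + s by rewrite /s addrC subrK.
have hy : y = b + t by rewrite /t addrC subrK.
clearbody s t; clearbody a b; subst x y.
rewrite opprD addrACA.
have := normD2 hip (a - b) (s - t).
have := exprn_ge0 2 (normr_ge0 (a - b)).
move: (`|a - b + (s - t)|) (normr_ge0 (a - b + (s - t))) (`|s - t|) (normr_ge0 (s - t)) => P P0 Q Q0.
move=> h1 h2; rewrite leNgt; apply/negP => hlt; nra.
Qed.

Lemma J_mono lam mu x : 0 < lam -> lam <= mu -> `|x - J lam x| <= `|x - J mu x|.
Proof.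
move=> lam0 lm; have mu0 : 0 < mu by apply: lt_le_trans lm.
have h := Amono (J_spec x lam0) (J_spec x mu0).
move: h; set a := J lam x; set b := J mu x; set s := x - a; set t := x - b => h.
have hab : a - b = t - s by rewrite /s /t opprB [RHS]addrC addrA subrK.
clearbody s t; rewrite hab !(ipBl hip, ipBr hip, ipZr hip) (ipC hip s t) !(ipxx hip) in h.
have cs := CS hip t s.
have li : mu^-1 <= lam^-1 by rewrite lef_pV2 ?posrE.
have mi0 : 0 < mu^-1 by rewrite invr_gt0.
move: h cs li mi0; move: (lam^-1) (mu^-1) (ip t s) (`|s|) (normr_ge0 s) (`|t|) (normr_ge0 t) => L M P S S0 T T0.
move=> h cs li mi0; rewrite leNgt; apply/negP => hlt.
have h1 : (L + M) * P <= (L + M) * (S * T) by apply: ler_wpM2l; lra.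
have h2 : L * S * (S - T) <= M * T * (S - T) by nra.
have h3 : L * S <= M * T by nra.
nra.
Qed.

Lemma J_cont lam mu x : 0 < lam -> 0 < mu ->
  mu * `| `|x - J lam x| - `|x - J mu x| | <= `|mu - lam| * `|x - J mu x|.
Proof.
move=> lam0 mu0; have h := Amono (J_spec x lam0) (J_spec x mu0).
move: h; set a := J lam x; set b := J mu x; set s := x - a; set t := x - b => h.
have hab : a - b = t - s by rewrite /s /t opprB [RHS]addrC addrA subrK.
clearbody s t; rewrite hab in h.
have h' : 0 <= ip (t - s) (mu *: s - lam *: t).
  have -> : mu *: s - lam *: t = (lam * mu) *: (lam^-1 *: s - mu^-1 *: t).
    rewrite scalerBr !scalerA mulrAC divff ?gt_eqF // mul1r.
    by rewrite -mulrA divff ?gt_eqF // mulr1.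
  by rewrite (ipZr hip) mulr_ge0 // mulr_ge0 // ltW.
have e1 : ip (t - s) (mu *: s - lam *: t) =
   - mu * `|t - s| ^+ 2 + (mu - lam) * ip (t - s) t.
  rewrite (normB2 hip) !(ipBl hip, ipBr hip, ipZr hip) (ipC hip s t) !(ipxx hip); ring.
rewrite e1 in h'.
have cs := CSn hip (t - s) t.
apply: le_trans (_ : mu * `|s - t| <= _).
  by apply: ler_wpM2l; [exact: ltW | exact: ler_dist_dist].
rewrite -normrN opprB.
have : (mu - lam) * ip (t - s) t <= `|mu - lam| * (`|t - s| * `|t|).
  by rewrite (le_trans (ler_norm _)) // normrM; apply: ler_wpM2l.
move: h' cs; move: (ip (t - s) t) (`|t - s|) (normr_ge0 (t - s)) (`|t|) (normr_ge0 t) (`|mu - lam|) (normr_ge0 (mu - lam)) => P D D0 T T0 K K0.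
move=> h1 cs hh.
have : mu * D ^+ 2 <= K * (D * T) by lra.
rewrite expr2 => h2.
have [D00|Dp] := eqVneq D 0; first by rewrite D00 mulr0; nra.
have Dpos : 0 < D by rewrite lt_neqAle eq_sym Dp D0.
nra.
Qed.

End Resolvent.

Section Main.
Variables (R : realType) (V : completeNormedModType R) (ip : V -> V -> R).
Hypothesis hip : is_inner_product ip.
Variable A : V -> set V.
Hypothesis hA : maximal_monotone ip A.
Variables (p : nat) (theta : R).
Hypothesis hp : (2 <= p)%N.
Hypothesis ht : 0 < theta < 1.

Local Notation J := (resolvent A).
Local Notation e := (ex R p).
Let r : R := (p.-1)%:R.

Lemma r_gt0 : 0 < r.
Proof. by rewrite /r ltr0n; case: p hp => [|[|n]]. Qed.

Lemma e_gt0 : 0 < e.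
Proof. by rewrite /ex invr_gt0 r_gt0. Qed.

Lemma powK1 c : 0 <= c -> (c `^ r) `^ e = c.
Proof. by move=> c0; rewrite -powRrM /ex -/r divff ?gt_eqF ?r_gt0 // powRr1. Qed.

Lemma powK2 c : 0 <= c -> (c `^ e) `^ r = c.
Proof. by move=> c0; rewrite -powRrM /ex -/r mulVf ?gt_eqF ?r_gt0 // powRr1. Qed.

Lemma powe_le a b : 0 <= a -> a <= b -> a `^ e <= b `^ e.
Proof. move=> a0 ab; apply: ge0_ler_powR; rewrite ?nnegrE //; [exact: ltW e_gt0 | exact: le_trans ab]. Qed.

Lemma powe_lt a b : 0 <= a -> a < b -> a `^ e < b `^ e.
Proof. by move=> a0 ab; apply: gt0_ltr_powR; rewrite ?nnegrE ?e_gt0 //; apply: ltW (le_lt_trans a0 ab). Qed.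

Lemma powr_le a b : 0 <= a -> a <= b -> a `^ r <= b `^ r.
Proof. by move=> a0 ab; apply: ge0_ler_powR; rewrite ?nnegrE ?(ltW e_gt0) //; apply: le_trans ab. Qed.

Lemma powe_inv a : 0 < a -> a^-1 `^ e * a `^ e = 1.
Proof. by move=> a0; rewrite -powRM ?invr_ge0 ?ltW // mulVf ?gt_eqF // powR1. Qed.

Definition gg (x : V) (lam : R) := `|x - J lam x|.
Definition ff (x : V) (lam : R) := lam `^ e * gg x lam.

Lemma gg_cont x (mu : R) : 0 < mu -> gg x lam @[lam --> mu] --> gg x mu.
Proof.
move=> mu0; apply/cvgrPdist_le => eps eps0.
have hg := normr_ge0 (x - J mu x).
have d0 : 0 < eps * mu / (gg x mu + 1) by apply: divr_gt0; [apply: mulr_gt0|rewrite /gg; lra].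
near=> lam.
have lam0 : 0 < lam by near: lam; exact: lt_nbhsr.
have hd : `|mu - lam| <= eps * mu / (gg x mu + 1).
  by near: lam; apply: (cvgrPdist_le _ _).1 cvg_id _ d0.
have := J_cont hip hA x lam0 mu0; rewrite -/(gg x lam) -/(gg x mu) => hc.
rewrite distrC.
have h1 : `|mu - lam| * gg x mu <= eps * mu / (gg x mu + 1) * gg x mu.
  by apply: ler_wpM2r => //; exact: normr_ge0.
have h2 : eps * mu / (gg x mu + 1) * gg x mu <= eps * mu.
  rewrite mulrAC ler_pdivrMr; last by rewrite /gg; lra.
  apply: ler_wpM2l; [by apply: mulr_ge0; apply: ltW | rewrite /gg; lra].
move: hc h1 h2; move: (`|gg x lam - gg x mu|) (`|mu - lam| * gg x mu) (eps * mu / (gg x mu + 1) * gg x mu) => D P Q.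
move=> hc h1 h2; rewrite leNgt; apply/negP => hlt; nra.
Unshelve. all: by end_near.
Qed.

Lemma ff_cont x (mu : R) : 0 < mu -> ff x lam @[lam --> mu] --> ff x mu.
Proof.
move=> mu0; apply: cvgM; last exact: gg_cont.
have hd : differentiable (fun a : R => a `^ e) mu.
  by apply/derivable1_diffP; apply: derivable_powR; rewrite in_itv /= mu0.
exact: (differentiable_continuous hd).
Qed.
Lemma th_gt0 : 0 < theta `^ e.
Proof. by apply: powR_gt0; case/andP: ht. Qed.

Lemma gg_ge0 x lam : 0 <= gg x lam. Proof. exact: normr_ge0. Qed.

Lemma gg_gt0 x lam : 0 < lam -> ~ A x 0 -> 0 < gg x lam.
Proof.
move=> lam0 nx; rewrite lt_neqAle gg_ge0 andbT; apply/eqP => h0; apply: nx.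
apply: (J_fixinv hip hA lam0); apply/esym/eqP; rewrite -subr_eq0 -normr_eq0.
by rewrite -/(gg x lam) -h0.
Qed.

Lemma ff_exists x : ~ A x 0 -> exists2 L, 0 < L & ff x L = theta `^ e.
Proof.
move=> nx; have th0 := th_gt0; have g1 := gg_gt0 ltr01 nx.
set th := theta `^ e in th0 *.
set c1 := Order.min 1 (th / gg x 1).
set c2 := Order.max 1 (th / gg x 1).
have q0 : 0 < th / gg x 1 by apply: divr_gt0.
have c1p : 0 < c1 by rewrite lt_min ltr01 q0.
have c1l : c1 <= 1 by rewrite ge_min lexx.
have c1q : c1 <= th / gg x 1 by rewrite ge_min lexx orbT.
have c2g : 1 <= c2 by rewrite le_max lexx.
have c2q : th / gg x 1 <= c2 by rewrite le_max lexx orbT.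
set a0 := c1 `^ r; set b0 := c2 `^ r.
have a0p : 0 < a0 by apply: powR_gt0.
have h1r : (1 : R) `^ r = 1 by rewrite powR1.
have a0l : a0 <= 1 by rewrite /a0 -[X in _ <= X]h1r; apply: powr_le => //; exact: ltW.
have b0g : 1 <= b0 by rewrite /b0 -[X in X <= _]h1r; apply: powr_le.
have fa : ff x a0 <= th.
  rewrite /ff /a0 powK1; last exact: ltW c1p.
  have := J_mono hip hA x a0p a0l; rewrite -/(gg x a0) -/(gg x 1) => hm.
  apply: (le_trans (ler_wpM2l (ltW c1p) hm)).
  apply: (le_trans (ler_wpM2r (ltW g1) c1q)).
  by rewrite divfK ?gt_eqF.
have fb : th <= ff x b0.
  rewrite /ff /b0 powK1; last by apply: le_trans c2g; exact: ler01.
  have := J_mono hip hA x ltr01 b0g; rewrite -/(gg x b0) -/(gg x 1) => hm.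
  have c20 : 0 <= c2 by apply: le_trans c2g; exact: ler01.
  apply: le_trans (ler_wpM2l c20 hm).
  apply: le_trans (ler_wpM2r (ltW g1) c2q).
  by rewrite divfK ?gt_eqF.
have hab : a0 <= b0 by apply: le_trans b0g.
have hc : {within `[a0, b0], continuous (ff x)}.
  apply: continuous_in_subspaceT => z; rewrite inE /= in_itv /= => /andP[z1 z2].
  by apply: ff_cont; apply: lt_le_trans z1.
have hv : Order.min (ff x a0) (ff x b0) <= th <= Order.max (ff x a0) (ff x b0).
  by apply/andP; split; [rewrite ge_min fa | rewrite le_max fb orbT].
have [c] := IVT hab hc hv; rewrite in_itv /= => /andP[c1' _] fc.
by exists c => //; apply: lt_le_trans c1'.
Qed.
Definition SS x := [set alpha : R | 0 < alpha /\
   `|x - J alpha^-1 x| <= alpha `^ e * theta `^ e].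

Lemma GammaE x : Gamma A p theta x = (inf (SS x)) `^ e.
Proof. by []. Qed.

Lemma G_notin x : A x 0 -> Gamma A p theta x = 0.
Proof.
move=> Ax; rewrite GammaE.
have hS : forall al, 0 < al -> SS x al.
  move=> al al0; split => //; rewrite (J_fix hip hA) ?invr_gt0 // subrr normr0.
  by apply: mulr_ge0; apply: powR_ge0.
have lb : lbound (SS x) 0 by move=> al [] /ltW.
have ne : SS x !=set0 by exists 1; apply: hS; exact: ltr01.
have i0 : 0 <= inf (SS x) := lb_le_inf ne lb.
have i1 : inf (SS x) <= 0.
  rewrite leNgt; apply/negP => ip0.
  have h2 : 0 < inf (SS x) / 2 by apply: divr_gt0.
  have := ge_inf (ex_intro _ 0 lb) (hS _ h2); lra.
have -> : inf (SS x) = 0 by apply/le_anti; rewrite i0 i1.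
by rewrite powR0 // gt_eqF // e_gt0.
Qed.

Lemma G_in x : ~ A x 0 -> exists a, [/\ 0 < a, SS x a, Gamma A p theta x = a `^ e,
   (forall al, SS x al -> a <= al) & a = 1 / Lambda A p theta x].
Proof.
move=> nx.
have hex : exists lam : R, 0 < lam /\ lam `^ e * `|x - J lam x| = theta `^ e.
  by have [L L0 fL] := ff_exists nx; exists L.
have [L0 fL] : (0 < Lambda A p theta x) /\ ((Lambda A p theta x) `^ e * `|x - J (Lambda A p theta x) x| = theta `^ e).
  exact: (xgetPex 0 hex).
set Lam := Lambda A p theta x in L0 fL *.
set a := Lam^-1.
have a0 : 0 < a by rewrite invr_gt0.
have gL := gg_gt0 L0 nx.
have Sa : SS x a.
  split => //; rewrite /a invrK -fL mulrA powe_inv // mul1r //.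
have amin : forall al, SS x al -> a <= al.
  move=> al [al0 hal]; rewrite leNgt; apply/negP => hlt.
  have lam0 : 0 < al^-1 by rewrite invr_gt0.
  have hl : Lam < al^-1 by rewrite -(invrK Lam) ltf_pV2 ?posrE.
  have hm := J_mono hip hA x L0 (ltW hl); rewrite -/(gg x Lam) -/(gg x al^-1) in hm.
  have hp1 := powe_lt (ltW L0) hl.
  have i1 : Lam `^ e * gg x Lam < al^-1 `^ e * gg x Lam by rewrite ltr_pM2r.
  have i2 : al^-1 `^ e * gg x Lam <= al^-1 `^ e * gg x al^-1.
    by apply: ler_wpM2l => //; exact: powR_ge0.
  have i3 : al^-1 `^ e * gg x al^-1 <= al^-1 `^ e * (al `^ e * theta `^ e).
    by apply: ler_wpM2l => //; exact: powR_ge0.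
  rewrite mulrA powe_inv // mul1r in i3.
  rewrite /gg fL in i1; move: i1 i2 i3; rewrite /gg; lra.
have hinf : inf (SS x) = a.
  apply/le_anti; rewrite (ge_inf (ex_intro _ a amin) Sa) /=.
  by apply: lb_le_inf => //; exists a.
exists a; split => //; first by rewrite GammaE hinf.
by rewrite div1r.
Qed.

Lemma gg_lip x y lam : 0 < lam -> gg y lam <= gg x lam + `|x - y|.
Proof.
move=> lam0; have := J_firm hip hA y x lam0.
have := ler_normD (x - J lam x) ((y - J lam y) - (x - J lam x)).
have -> : (x - J lam x) + ((y - J lam y) - (x - J lam x)) = y - J lam y by rewrite addrC subrK.
rewrite /gg (distrC y x); lra.
Qed.

Lemma G_lip1 x y : Gamma A p theta y <= Gamma A p theta x + theta `^ (- e) * `|x - y|.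
Proof.
have K0 : theta `^ (- e) * theta `^ e = 1 by rewrite powRN mulVf // gt_eqF // th_gt0.
have Kp : 0 < theta `^ (- e) by apply: powR_gt0; case/andP: ht.
have d0 := normr_ge0 (x - y).
have Gx0 : 0 <= Gamma A p theta x by rewrite GammaE powR_ge0.
case: (pselect (A y 0)) => [Ay|ny].
  by rewrite G_notin //; apply: addr_ge0 => //; apply: mulr_ge0 => //; exact: ltW.
have [be [be0 Sbe -> bmin _]] := G_in ny.
have key : forall c, 0 < c -> gg y (c `^ r)^-1 <= c * theta `^ e -> be `^ e <= c.
  move=> c c0 hc; rewrite -(powK1 (ltW c0)); apply: powe_le; first exact: ltW.
  apply: bmin; split; first exact: powR_gt0.
  by rewrite powK1 ?invrK //; exact: ltW.
have th0 := th_gt0.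
case: (pselect (A x 0)) => [Ax|nx].
  rewrite G_notin // add0r.
  have dp : 0 < `|x - y|.
    rewrite lt_neqAle d0 andbT eq_sym normr_eq0 subr_eq0; apply/negP => /eqP exy.
    by apply: ny; rewrite -exy.
  have c0 : 0 < theta `^ (- e) * `|x - y| by apply: mulr_gt0.
  apply: key => //.
  have b0 : 0 < ((theta `^ (- e) * `|x - y|) `^ r)^-1 by rewrite invr_gt0; apply: powR_gt0.
  have := gg_lip x y b0; rewrite {2}/gg (J_fix hip hA b0 Ax) subrr normr0 add0r => h.
  by rewrite mulrAC K0 mul1r.
have [al [al0 Sal -> _ _]] := G_in nx.
have ale0 : 0 <= al `^ e by exact: powR_ge0.
have c0 : 0 < al `^ e + theta `^ (- e) * `|x - y|.
  by apply: ltr_pwDl; [apply: powR_gt0 | apply: mulr_ge0 => //; exact: ltW].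
apply: key => //.
have b0 : 0 < (al `^ e + theta `^ (- e) * `|x - y|) `^ r by apply: powR_gt0.
have lam0 : 0 < ((al `^ e + theta `^ (- e) * `|x - y|) `^ r)^-1 by rewrite invr_gt0.
have hb : al <= (al `^ e + theta `^ (- e) * `|x - y|) `^ r.
  rewrite -{1}(powK2 (ltW al0)); apply: powr_le => //.
  by rewrite lerDl; apply: mulr_ge0 => //; exact: ltW.
have hl : ((al `^ e + theta `^ (- e) * `|x - y|) `^ r)^-1 <= al^-1.
  by rewrite lef_pV2 ?posrE.
have h1 := gg_lip x y lam0.
have h2 := J_mono hip hA x lam0 hl; rewrite -/(gg x _) -/(gg x al^-1) in h2.
have h3 := Sal.2; rewrite -/(gg x al^-1) in h3.
rewrite mulrDl mulrAC K0 mul1r.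
apply: le_trans h1 _; rewrite lerD2r; exact: le_trans h2 h3.
Qed.

Lemma G_lip x y : `|Gamma A p theta x - Gamma A p theta y| <= theta `^ (- e) * `|x - y|.
Proof.
have h1 := G_lip1 x y; have h2 := G_lip1 y x; rewrite distrC in h2.
move: h1 h2; move: (Gamma A p theta x) (Gamma A p theta y) (theta `^ (- e) * `|x - y|) => a b c h1 h2.
rewrite ler_norml; apply/andP; split; lra.
Qed.

End Main.

Theorem lemma2p3 (R : realType) (V : completeNormedModType R)
  (ip : V -> V -> R) (A : V -> set V) (p : nat) (theta : R) :
  is_inner_product ip -> maximal_monotone ip A -> (2 <= p)%N ->
  0 < theta < 1 ->
  (forall x, x \in Omega A ->
     Gamma A p theta x = (1 / Lambda A p theta x) `^ ex R p) /\
  (forall x, x \notin Omega A -> Gamma A p theta x = 0) /\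
  (forall x y, `|Gamma A p theta x - Gamma A p theta y|
                 <= theta `^ (- ex R p) * `|x - y|).
Proof.
move=> hip hA hp ht; split; [|split].
- move=> x /set_mem nx.
  by have [a [_ _ -> _ ->]] := G_in hip hA hp ht nx.
- move=> x /negP hx; apply: (G_notin hip hA theta hp).
  by case: (pselect (A x 0)) => // nx; exfalso; apply: hx; exact: mem_set.
- by move=> x y; exact: (G_lip hip hA hp ht).
Qed.
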